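(* Let $n \ge 0$ and let $Z = \sum_{j=1}^m P_j$ be a point cluster of degree $m$ in $\mathbb{P}^n(\mathbb{C})$. Fix row vectors $P_j \in \mathbb{C}^{n+1}$ representing the points of $Z$ with $\|P_j\|^2 = \bar{P}_j P_j^\top = 1$. Then there is a constant $c > 0$ such that for every positive definite Hermitian $(n+1)\times(n+1)$ matrix $Q$ with eigenvalues $0 < \lambda_0 \le \lambda_1 \le \dots \le \lambda_n$ we have \[ \prod_{j=1}^m \bigl(\bar{P}_j Q P_j^\top\bigr) \ge c \prod_{k=0}^n \lambda_k^{\varphi_Z(k) - \varphi_Z(k-1)}. \]
   Context: A point cluster (positive zero-cycle) of degree $m$ in $\mathbb{P}^n$ is a formal sum $Z = \sum_{j=1}^m P_j$ of (not necessarily distinct) points $P_j \in \mathbb{P}^n$. For a linear subspace $L \subseteq \mathbb{P}^n$, $Z|_L$ denotes the sum of those points of $Z$ lying in $L$ (counted with multiplicity), and $\deg$ is the number of points. For $-1 \le k \le n$, $\varphi_Z(k) = \max\{\deg Z|_L : L \subseteq \mathbb{P}^n \text{ a } k\text{-dimensional linear subspace}\}$ (the $(-1)$-dimensional subspace being empty, so $\varphi_Z(-1) = 0$). Points are written as row vectors, $\bar{P}$ denotes complex conjugation. *)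

(* Defs.v *)
From HB Require Import structures.
From mathcomp Require Import all_boot all_order all_algebra.
From mathcomp Require Import boolp.
From mathcomp Require Import reals.
From mathcomp Require Import complex.
Set Implicit Arguments. Unset Strict Implicit. Unset Printing Implicit Defensive.
Import Order.TTheory GRing.Theory Num.Theory.
Local Open Scope ring_scope.

Definition degZL (C : fieldType) (n m : nat) (P : 'I_m -> 'rV[C]_n.+1)
    (L : 'M[C]_n.+1) : nat :=
  #|[set j : 'I_m | (P j <= L)%MS]|.

(* phiv P d = max { deg Z|_L : L a vector subspace of dimension d }
            = phi_Z(d - 1)  (a projective k-plane is a (k+1)-dim vector
            subspace; phiv P 0 = phi_Z(-1)). The maximum is over values
            in 0..m, which bound deg Z|_L. *)
Definition phiv (C : fieldType) (n m : nat) (P : 'I_m -> 'rV[C]_n.+1)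
    (d : nat) : nat :=
  \max_(i < m.+1 | `[< exists L : 'M[C]_n.+1,
                        \rank L = d /\ degZL P L = i >]) (i : nat).

Definition herm_form (R : rcfType) (n : nat) (Q : 'M[R[i]]_n.+1)
    (v : 'rV[R[i]]_n.+1) : R[i] :=
  (map_mx Num.conj v *m Q *m v^T) 0 0.

(* Main.v *)
Require Import Defs.
From HB Require Import structures.
From mathcomp Require Import all_boot all_order all_algebra.
From mathcomp Require Import boolp reals complex.
From mathcomp Require Import spectral sesquilinear mxred.
From mathcomp Require Import zify ring lra fingroup perm.
Import Order.TTheory GRing.Theory Num.Theory.
Local Open Scope ring_scope.
Set Implicit Arguments. Unset Strict Implicit. Unset Printing Implicit Defensive.
Local Open Scope sesquilinear_scope.
Definition nrm2 (C : numClosedFieldType) p (x : 'rV[C]_p) : C := \sum_i `|x 0 i| ^+ 2.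

Lemma nrm2E (C : numClosedFieldType) p (x : 'rV[C]_p) :
  nrm2 x = (map_mx Num.conj x *m x^T) 0 0.
Proof.
by rewrite /nrm2 mxE; apply: eq_bigr => i _; rewrite !mxE normCK mulrC.
Qed.

Lemma char_poly_conj (R : fieldType) n (M D : 'M[R]_n) : M \in unitmx ->
  char_poly (invmx M *m D *m M) = char_poly D.
Proof.
move=> Mu; rewrite /char_poly /char_poly_mx.
set M' := map_mx polyC M.
have M'u : M' \in unitmx by rewrite map_unitmx.
have e : 'X%:M - map_mx polyC (invmx M *m D *m M) = invmx M' *m ('X%:M - map_mx polyC D) *m M'.
  rewrite !map_mxM map_invmx -/M' mulmxBr mulmxBl; congr (_ - _).
  by rewrite -mulmxA -scalar_mxC mulmxA mulVmx ?mul1mx.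
rewrite e !det_mulmx det_inv mulrC mulrA mulrV ?mul1r //.
Qed.

Lemma spectral_sorted (C : numClosedFieldType) n (Q : 'M[C]_n.+1) (lam : 'I_n.+1 -> C) :
  map_mx Num.conj Q^T = Q ->
  char_poly Q = \prod_(k < n.+1) ('X - (lam k)%:P) ->
  exists N : 'M[C]_n.+1,
    (forall x : 'rV[C]_n.+1, nrm2 (x *m N^T) = nrm2 x) /\
    (forall v : 'rV[C]_n.+1, (map_mx Num.conj v *m Q *m v^T) 0 0 = \sum_k lam k * `|(v *m N^T) 0 k| ^+ 2).
Proof.
move=> hQ hchar.
have Qn : Q \is normalmx by apply/normalmxP; rewrite hQ.
set M := spectralmx Q; set d := spectral_diag Q.
have Mu : M \is unitarymx by apply: spectral_unitarymx.
have eQ : Q = M^t* *m diag_mx d *m M.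
  by rewrite -invmx_unitary //; apply/orthomx_spectralP.
have MtM : M^t* *m M = 1%:M by apply: mulmx1C; apply/unitarymxP.
have cd : char_poly Q = \prod_(i < n.+1) ('X - (d 0 i)%:P).
  rewrite eQ -invmx_unitary // char_poly_conj ?unitarymx_unit //.
  by rewrite char_poly_trig ?diag_mx_is_trig //; apply: eq_bigr => i _; rewrite mxE eqxx mulr1n.
have pe : perm_eq [tuple lam i | i < n.+1] [tuple d 0 i | i < n.+1].
  apply: prod_XsubC_eq; rewrite !big_tuple.
  under eq_bigr do rewrite tnth_mktuple.
  under [RHS]eq_bigr do rewrite tnth_mktuple.
  by rewrite -hchar -cd.
have [p hp] := tuple_permP pe.
have lp : forall k, lam k = d 0 (p k).
  move=> k; have hp' : [tuple lam i | i < n.+1] = [tuple tnth [tuple d 0 i0 | i0 < n.+1] (p i) | i < n.+1].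
    by apply: val_inj.
  by have := congr1 (fun t => tnth t k) hp'; rewrite /= !tnth_mktuple.
set N := row_perm p M.
have yN : forall x : 'rV[C]_n.+1, forall k, (x *m N^T) 0 k = (x *m M^T) 0 (p k).
  by move=> x k; rewrite !mxE; apply: eq_bigr => l _; rewrite !mxE.
have nM : forall x : 'rV[C]_n.+1, nrm2 (x *m M^T) = nrm2 x.
  move=> x; rewrite !nrm2E map_mxM trmx_mul -mulmxA [X in _ *m X]mulmxA.
  by rewrite trmxK MtM mul1mx.
exists N; split.
  move=> x; rewrite -[RHS]nM /nrm2.
  under eq_bigr do rewrite yN.
  by rewrite [RHS](reindex_inj (@perm_inj _ p)).
move=> v; rewrite eQ.
have -> : map_mx Num.conj v *m (M^t* *m diag_mx d *m M) *m v^T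
     = map_mx Num.conj (v *m M^T) *m diag_mx d *m (v *m M^T)^T.
  by rewrite map_mxM trmx_mul trmxK !mulmxA.
rewrite mxE.
under eq_bigr do rewrite mxE.
rewrite (reindex_inj (@perm_inj _ p)); apply: eq_bigr => k _.
rewrite yN lp normCK.
rewrite (bigD1 (p k)) //= big1 ?addr0; last first.
  by move=> i hi; rewrite [diag_mx _ _ _]mxE (negbTE hi) mulr0n mulr0.
by rewrite !mxE eqxx mulr1n; ring.
Qed.

Section Norms.
Variable C : numClosedFieldType.

Lemma le_sum_single (I : finType) (F : I -> C) i0 :
  (forall i, 0 <= F i) -> F i0 <= \sum_i F i.
Proof. by move=> h; rewrite (bigD1 i0) //= lerDl sumr_ge0. Qed.

Lemma sq_add (a b : C) : `|a + b| ^+ 2 <= 2%:R * `|a| ^+ 2 + 2%:R * `|b| ^+ 2.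
Proof.
have e : 2%:R * `|a| ^+ 2 + 2%:R * `|b| ^+ 2 = `|a + b| ^+ 2 + `|a - b| ^+ 2.
  by rewrite !normCK !rmorphD !rmorphN /=; ring.
by rewrite e lerDl exprn_ge0.
Qed.

Lemma sq_sum p (z : 'I_p -> C) :
  `|\sum_i z i| ^+ 2 <= 2%:R ^+ p * \sum_i `|z i| ^+ 2.
Proof.
elim: p z => [|p IH] z.
  by rewrite !big_ord0 normr0 expr0n /= mul1r.
rewrite !big_ord_recl; apply: le_trans (sq_add _ _) _.
set S := \sum_(i < p) `|z (lift ord0 i)| ^+ 2.
have S0 : 0 <= S by apply: sumr_ge0 => i _; apply: exprn_ge0.
have h1 := IH (fun i => z (lift ord0 i)).
have z0 : 0 <= `|z ord0| ^+ 2 by apply: exprn_ge0.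
have p2 : 2%:R <= (2%:R ^+ p.+1 : C).
  by rewrite -{1}(expr1 (2%:R : C)); apply: ler_eXn2l => //; rewrite ltr1n.
rewrite exprS mulrDr.
apply: lerD.
  rewrite -exprS; apply: ler_wpM2r => //.
apply: le_trans (ler_wpM2l _ h1) _; first by rewrite ler0n.
by rewrite mulrA -exprS.
Qed.

Definition frob p q (B : 'M[C]_(p, q)) : C := \sum_i \sum_j `|B i j| ^+ 2.

Lemma frob_ge0 p q (B : 'M[C]_(p, q)) : 0 <= frob B.
Proof. by apply: sumr_ge0 => i _; apply: sumr_ge0 => j _; apply: exprn_ge0. Qed.

Lemma nrm2_ge0 p (x : 'rV[C]_p) : 0 <= nrm2 x.
Proof. by apply: sumr_ge0 => i _; apply: exprn_ge0. Qed.

Lemma nrm2_eq0 p (x : 'rV[C]_p) : nrm2 x = 0 -> x = 0.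
Proof.
move=> h; apply/rowP => i; rewrite mxE.
have H := @psumr_eq0P _ _ xpredT (fun i => `|x 0 i| ^+ 2) (fun i _ => exprn_ge0 2 (normr_ge0 (x 0 i))) h.
have := H i isT.
by move/eqP; rewrite expf_eq0 /= normr_eq0 => /eqP.
Qed.

Lemma wcs p q (x : 'rV[C]_p) (B : 'M[C]_(p, q)) :
  nrm2 (x *m B) <= 2%:R ^+ p * nrm2 x * frob B.
Proof.
rewrite /nrm2 /frob.
apply: le_trans (_ : \sum_j 2%:R ^+ p * \sum_l `|x 0 l| ^+ 2 * `|B l j| ^+ 2 <= _).
  apply: ler_sum => j _; rewrite mxE; apply: le_trans (sq_sum _) _.
  by rewrite le_eqVlt; apply/orP; left; apply/eqP; congr (_ * _); apply: eq_bigr => l _; rewrite normrM exprMn.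
rewrite -mulr_sumr -mulrA; apply: ler_wpM2l; first by rewrite exprn_ge0 // ler0n.
rewrite exchange_big /= mulr_sumr; apply: ler_sum => l _; rewrite mulr_sumr.
apply: ler_sum => j _; apply: ler_wpM2r; first exact: exprn_ge0.
by apply: (@le_sum_single _ (fun i => `|x 0 i| ^+ 2)) => i; apply: exprn_ge0.
Qed.
End Norms.
Section Phi.
Variables (F : fieldType) (n m : nat) (P : 'I_m -> 'rV[F]_n.+1).

Lemma extend_rank : forall (e : nat) (L : 'M[F]_n.+1) d, (\rank L + e = d)%N -> (d <= n.+1)%N ->
  exists L' : 'M[F]_n.+1, (L <= L')%MS /\ \rank L' = d.
Proof.
elim=> [|e IH] L d hd hdn.
  by exists L; rewrite submx_refl -hd addn0.
have hlt : (\rank L < n.+1)%N by move: hdn; rewrite -hd; lia.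
have nfull : ~~ (1%:M <= L)%MS.
  by rewrite sub1mx /row_full; rewrite neq_ltn hlt.
have [i hi] : exists i, ~~ (row i (1%:M : 'M[F]_n.+1) <= L)%MS.
  apply/existsP; move: nfull; apply: contraR; rewrite negb_exists => /forallP H.
  by apply/row_subP => i; have := H i; rewrite negbK.
set v := row i (1%:M : 'M[F]_n.+1).
have hr : \rank (L + v)%MS = (\rank L).+1.
  have lt : (L < L + v)%MS.
    rewrite ltmxE addsmxSl /=; apply/negP => E.
    by move: hi; rewrite (submx_trans (addsmxSr L v) E).
  have := mxrank_adds_leqif L v; move=> [le _].
  have := lt; rewrite ltmxErank => /andP[_ lt'].
  have rv : (\rank v <= 1)%N by rewrite rank_leq_row.
  apply/eqP; rewrite eqn_leq lt' andbT; apply: leq_trans le _; lia.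
have hd' : (\rank (L + v)%MS + e = d)%N by rewrite hr -hd; lia.
have [L' [h1 h2]] := IH (L + v)%MS d hd' hdn.
by exists L'; split => //; apply: submx_trans h1; apply: addsmxSl.
Qed.

Lemma degZL_mono (L L' : 'M[F]_n.+1) : (L <= L')%MS -> (degZL P L <= degZL P L')%N.
Proof.
move=> hL; rewrite /degZL; apply: subset_leq_card; apply/subsetP => j.
by rewrite !inE => h; apply: submx_trans h hL.
Qed.

Lemma le_phiv (L : 'M[F]_n.+1) : (degZL P L <= phiv P (\rank L))%N.
Proof.
rewrite /phiv.
have hm : (degZL P L < m.+1)%N by rewrite ltnS /degZL (leq_trans (max_card _)) // card_ord.
apply: (@leq_bigmax_cond _ _ _ (Ordinal hm)) => /=.
by apply/asboolP; exists L.
Qed.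

Lemma phiv_le_m d : (phiv P d <= m)%N.
Proof. by apply/bigmax_leqP => i _; rewrite -ltnS. Qed.

Lemma phiv_mono d : (d < n.+1)%N -> (phiv P d <= phiv P d.+1)%N.
Proof.
move=> hd; apply/bigmax_leqP => i /asboolP [L [hr hi]].
have e1 : (\rank L + 1 = d.+1)%N by rewrite hr addn1.
have [L' [h1 h2]] := @extend_rank 1 L d.+1 e1 hd.
rewrite -hi -h2; apply: leq_trans (degZL_mono h1) (le_phiv L').
Qed.

Lemma phiv_top : phiv P n.+1 = m.
Proof.
apply/eqP; rewrite eqn_leq phiv_le_m /=.
have := le_phiv 1%:M; rewrite mxrank1; apply: leq_trans.
rewrite /degZL (_ : [set j | _] = setT); first by rewrite cardsT card_ord.
by apply/setP => j; rewrite !inE submx1.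
Qed.

Lemma phiv_bot : (forall j, P j != 0) -> phiv P 0 = 0%N.
Proof.
move=> nz; apply/eqP; rewrite -leqn0; apply/bigmax_leqP => i /asboolP [L [hr hi]].
rewrite -hi /degZL; move: hr => /eqP; rewrite mxrank_eq0 => /eqP ->.
rewrite leqn0 cards_eq0; apply/eqP/setP => j; rewrite !inE submx0.
by rewrite (negbTE (nz j)).
Qed.
End Phi.
Lemma maj (R : realDomainType) n : forall (lam : nat -> R) (a b : nat -> nat),
  (forall i, (i <= n)%N -> 0 < lam i) ->
  (forall i, (i < n)%N -> lam i <= lam i.+1) ->
  (forall k, (k <= n)%N -> (\sum_(0 <= i < k.+1) b i <= \sum_(0 <= i < k.+1) a i)%N) ->
  (\sum_(0 <= i < n.+1) b i = \sum_(0 <= i < n.+1) a i)%N ->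
  \prod_(0 <= i < n.+1) lam i ^+ a i <= \prod_(0 <= i < n.+1) lam i ^+ b i.
Proof.
elim: n => [|n IH] lam a b lpos lmono pre tot.
  move: tot; rewrite !big_nat1 => ->; exact: lexx.
have h0 := pre 0%N isT; rewrite !big_nat1 in h0.
set d := (a 0%N - b 0%N)%N.
pose a' i := (a i.+1 + (if i == 0%N then d else 0))%N.
have IH' := IH (fun i => lam i.+1) a' (fun i => b i.+1).
have step : forall (f : nat -> nat) k, (\sum_(0 <= i < k.+2) f i = f 0%N + \sum_(0 <= i < k.+1) f i.+1)%N.
  by move=> f k; rewrite big_nat_recl.
have sa' : forall k, (\sum_(0 <= i < k.+1) a' i = \sum_(0 <= i < k.+1) a i.+1 + d)%N.
  move=> k; rewrite /a' big_split /=; congr (_ + _)%N.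
  by rewrite big_nat_recl //= big1_seq //= addn0.
have hIH : \prod_(0 <= i < n.+1) lam i.+1 ^+ a' i <= \prod_(0 <= i < n.+1) lam i.+1 ^+ b i.+1.
  apply: IH' => [i hi|i hi|k hk|].
- by apply: lpos.
- by apply: lmono.
- rewrite sa'.
  have := pre k.+1 hk; rewrite !step.
  rewrite /d; lia.
- rewrite sa'; move: tot; rewrite !step /d; lia.
rewrite (big_nat_recl _ _ _ (leq0n _)) [X in _ <= X](big_nat_recl _ _ _ (leq0n _)).
have l0 := lpos 0%N isT; have l1 := lpos 1%N isT.
have ex : (a 0%N = b 0%N + d)%N by rewrite /d; lia.
have pa' : \prod_(0 <= i < n.+1) lam i.+1 ^+ a' i = lam 1%N ^+ d * \prod_(0 <= i < n.+1) lam i.+1 ^+ a i.+1.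
  rewrite big_nat_recl // [X in _ = _ * X]big_nat_recl // /a' /=.
  have -> : \prod_(0<=i<n) lam i.+2 ^+ (a i.+2 + 0)%N = \prod_(0<=i<n) lam i.+2 ^+ a i.+2.
    by apply: eq_bigr => i _; rewrite addn0.
  by rewrite exprD; ring.
rewrite ex exprD -mulrA.
apply: ler_pM => //.
- by rewrite exprn_ge0 // ltW.
- apply: mulr_ge0; first by rewrite exprn_ge0 // ltW.
  rewrite big_seq; apply: prodr_ge0 => i; rewrite mem_index_iota => /andP[_ hi].
  by rewrite exprn_ge0 // ltW // lpos.
apply: le_trans (_ : lam 1%N ^+ d * \prod_(0 <= i < n.+1) lam i.+1 ^+ a i.+1 <= _).
  apply: ler_wpM2r.
    rewrite big_seq; apply: prodr_ge0 => i; rewrite mem_index_iota => /andP[_ hi].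
    by rewrite exprn_ge0 // ltW // lpos.
  by apply: lerXn2r; [rewrite nnegrE ltW // | rewrite nnegrE ltW // | exact: lmono].
by rewrite -pa'.
Qed.

Local Open Scope sesquilinear_scope.

Section LemA.
Variables (C : numClosedFieldType) (n m : nat) (P : 'I_m -> 'rV[C]_n.+1).

Definition Fam r (g : 'I_r -> 'I_m) : 'M[C]_(r, n.+1) := \matrix_(i < r, l < n.+1) P (g i) 0 l.

Definition Kbig : C := 1 + \sum_(r < n.+2) \sum_(g : {ffun 'I_r -> 'I_m}) frob (pinvmx (Fam g)).

Lemma Kbig_ge1 : 1 <= Kbig.
Proof.
rewrite lerDl; apply: sumr_ge0 => r _; apply: sumr_ge0 => g _; exact: frob_ge0.
Qed.

Lemma frob_le_Kbig r (g : 'I_r -> 'I_m) : (r <= n.+1)%N -> frob (pinvmx (Fam g)) <= Kbig.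
Proof.
move=> hr; rewrite /Kbig; apply: le_trans (_ : \sum_(r < n.+2) \sum_(g : {ffun 'I_r -> 'I_m}) frob (pinvmx (Fam g)) <= _); last first.
  by rewrite lerDr.
have hr' : (r < n.+2)%N by [].
have H1 := @le_sum_single C _ (fun r : 'I_n.+2 => \sum_(g : {ffun 'I_r -> 'I_m}) frob (pinvmx (Fam g))) (Ordinal hr')
   (fun r' => sumr_ge0 _ (fun g' _ => frob_ge0 _)).
apply: le_trans H1; rewrite /=.
have -> : Fam g = Fam (finfun g) by apply/matrixP => i l; rewrite !mxE ffunE.
by apply: (@le_sum_single C _ (fun g' : {ffun 'I_r -> 'I_m} => frob (pinvmx (Fam g')))) => g'; exact: frob_ge0.
Qed.

Definition tail (N : 'M[C]_n.+1) (j : 'I_m) (k : nat) : C :=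
  \sum_(i < n.+1) (if (k <= i)%N then `|(P j *m N^T) 0 i| ^+ 2 else 0).

Definition Dc : C := 2%:R ^+ n.+1 * Kbig * 2%:R ^+ n.+1.
Definition delta : C := (2%:R * Dc)^-1.

Lemma lemA (N : 'M[C]_n.+1) : (forall x : 'rV[C]_n.+1, nrm2 (x *m N^T) = nrm2 x) ->
  forall k, (k <= n)%N -> (#|[set j | (tail N j k.+1 < delta)%R]| <= phiv P k.+1)%N.
Proof.
move=> hN k hk; set S := [set j | (tail N j k.+1 < delta)%R].
rewrite leqNgt; apply/negP => hS.
pose AS : 'M[C]_(#|S|, n.+1) := \matrix_(i, l) P (enum_val i) 0 l.
have PinAS : forall j, j \in S -> (P j <= AS)%MS.
  move=> j hj; have -> : P j = row (enum_rank_in hj j) AS.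
    by apply/rowP => l; rewrite !mxE enum_rankK_in.
  exact: row_sub.
have hrank : (k.+1 < \rank AS)%N.
  rewrite ltnNge; apply/negP => hle.
  have e1 : (\rank <<AS>>%MS + (k.+1 - \rank AS) = k.+1)%N by rewrite genmxE; lia.
  have [L [hL hrL]] := extend_rank e1 hk.
  have : (#|S| <= degZL P L)%N.
    rewrite /degZL; apply: subset_leq_card; apply/subsetP => j hj; rewrite inE.
    by apply: submx_trans (PinAS j hj) _; apply: submx_trans hL; rewrite genmxE.
  move=> /leq_trans /(_ (le_phiv P L)); rewrite hrL => h.
  by move: hS; rewrite ltnNge h.
set r := \rank AS.
set f := maxrankfun AS.
pose g := fun i => enum_val (f i).
pose F := rowsub f AS.
have FE : F = Fam g by apply/matrixP => i l; rewrite !mxE.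
have Ffree : row_free F := maxrowsub_free AS.
have rle : (r <= n.+1)%N := rank_leq_col AS.
pose Y := F *m N^T.
have YE : forall l i, Y l i = (P (g l) *m N^T) 0 i.
  by move=> l i; rewrite !mxE; apply: eq_bigr => t _; rewrite !mxE.
have hk1 : (k.+1 <= n.+1)%N by [].
pose Z : 'M[C]_(r, k.+1) := \matrix_(l, i) Y l (widen_ord hk1 i).
have rZ : (\rank Z < r)%N := leq_ltn_trans (rank_leq_col Z) hrank.
have [i0 hi0] : exists i0, row i0 (kermx Z) != 0.
  apply/existsP; apply: contraT; rewrite negb_exists => /forallP H.
  have : kermx Z = 0 by apply/row_matrixP => i; rewrite row0; apply/eqP; have := H i; rewrite negbK.
  move=> /eqP; rewrite -mxrank_eq0 mxrank_ker => /eqP; lia.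
pose a := row i0 (kermx Z).
have aZ : a *m Z = 0 by rewrite /a -row_mul mulmx_ker row0.
have aY0 : forall i : 'I_n.+1, (i <= k)%N -> (a *m Y) 0 i = 0.
  move=> i hi; have hi' : (i < k.+1)%N by [].
  have := congr1 (fun M : 'M[C]_(1, k.+1) => M 0 (Ordinal hi')) aZ; rewrite [RHS]mxE => h.
  rewrite -[RHS]h !mxE.
  apply: eq_bigr => l _; rewrite [Z _ _]mxE; congr (_ * Y l _); exact: val_inj.
pose x := a *m F.
have ax : a = x *m pinvmx F.
  by apply: (row_free_inj Ffree); rewrite mulmxKpV //; exact: submxMl.
have K0 : 0 <= Kbig by apply: le_trans Kbig_ge1; exact: ler01.
have p20 : forall e, 0 <= (2%:R : C) ^+ e by move=> e; rewrite exprn_ge0 // ler0n.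
have b1 : nrm2 a <= 2%:R ^+ n.+1 * nrm2 x * Kbig.
  rewrite {1}ax; apply: le_trans (wcs _ _) _.
  apply: ler_wpM2l; first by apply: mulr_ge0 => //; exact: nrm2_ge0.
  by rewrite FE; apply: frob_le_Kbig.
have d0 : 0 < delta.
  rewrite /delta invr_gt0 /Dc; apply: mulr_gt0; first by rewrite ltr0n.
  apply: mulr_gt0; last by rewrite exprn_gt0 // ltr0n.
  by apply: mulr_gt0; [rewrite exprn_gt0 // ltr0n | apply: lt_le_trans Kbig_ge1; exact: ltr01].
have tl : forall l, tail N (g l) k.+1 <= delta.
  move=> l; have : g l \in S by apply: enum_valP.
  by rewrite inE => /ltW.
have b2 : nrm2 x <= 2%:R ^+ r * nrm2 a * delta.
  rewrite -hN /x -mulmxA -/Y.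
  have e1 : nrm2 (a *m Y) = \sum_(i < n.+1) (if (k < i)%N then `|\sum_l a 0 l * Y l i| ^+ 2 else 0).
    apply: eq_bigr => i _; case: ltnP => hki; first by rewrite mxE.
    by rewrite aY0 // normr0 expr0n.
  rewrite e1.
  apply: le_trans (_ : \sum_(i < n.+1) (if (k < i)%N then 2%:R ^+ r * \sum_l `|a 0 l| ^+ 2 * `|Y l i| ^+ 2 else 0) <= _).
    apply: ler_sum => i _; case: ifP => _ //.
    apply: le_trans (sq_sum _) _.
    by rewrite le_eqVlt; apply/orP; left; apply/eqP; congr (_ * _); apply: eq_bigr => l _; rewrite normrM exprMn.
  have e2 : \sum_(i < n.+1) (if (k < i)%N then 2%:R ^+ r * \sum_l `|a 0 l| ^+ 2 * `|Y l i| ^+ 2 else 0)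
     = 2%:R ^+ r * \sum_l `|a 0 l| ^+ 2 * tail N (g l) k.+1.
    transitivity (\sum_(i < n.+1) \sum_l 2%:R ^+ r * (`|a 0 l| ^+ 2 * (if (k < i)%N then `|Y l i| ^+ 2 else 0))).
      apply: eq_bigr => i _; case: ifP => _; first by rewrite mulr_sumr.
      by rewrite big1 // => l _; rewrite !mulr0.
    rewrite exchange_big /= mulr_sumr; apply: eq_bigr => l _.
    rewrite -mulr_sumr -mulr_sumr /tail; congr (_ * (_ * _)); apply: eq_bigr => i _.
    by case: ifP => // _; rewrite YE.
  rewrite e2 -mulrA; apply: ler_wpM2l => //.
  rewrite /nrm2 mulr_suml; apply: ler_sum => l _.
  by apply: ler_wpM2l; [exact: exprn_ge0 | exact: tl].
have na0 := nrm2_ge0 a.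
have pr : (2%:R : C) ^+ r <= 2%:R ^+ n.+1 by rewrite ler_eXn2l ?ltr1n.
have b3 : nrm2 a <= nrm2 a * (2%:R * Dc)^-1 * Dc.
  apply: le_trans b1 _.
  have -> : nrm2 a * (2%:R * Dc)^-1 * Dc = 2%:R ^+ n.+1 * (2%:R ^+ n.+1 * nrm2 a * delta) * Kbig.
    by rewrite /delta /Dc; ring.
  apply: ler_wpM2r => //; apply: ler_wpM2l => //.
  apply: le_trans b2 _; apply: ler_wpM2r; first exact: ltW.
  by apply: ler_wpM2r.
have Dc0 : Dc != 0.
  by rewrite /Dc !mulf_neq0 // ?expf_neq0 ?pnatr_eq0 // gt_eqF // (lt_le_trans ltr01 Kbig_ge1).
have e3 : nrm2 a * (2%:R * Dc)^-1 * Dc = nrm2 a / 2%:R by field.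
rewrite e3 in b3.
have : nrm2 a / 2%:R <= 0.
  have -> : nrm2 a / 2%:R = nrm2 a - nrm2 a / 2%:R by field.
  by rewrite subr_le0.
move=> h; have h2 : nrm2 a / 2%:R = 0.
  by apply/eqP; rewrite eq_le h /= divr_ge0 // ler0n.
have : nrm2 a = 0 by move: h2 => /eqP; rewrite mulf_eq0 invr_eq0 pnatr_eq0 orbF => /eqP.
by move/nrm2_eq0 => a0; move: hi0; rewrite -/a a0 eqxx.
Qed.
End LemA.
Local Open Scope sesquilinear_scope.

Lemma cnt x K : (\sum_(0 <= i < K) (x == i) = (x < K))%N.
Proof.
elim: K => [|K IH]; first by rewrite big_nil.
rewrite big_nat_recr //= IH ltnS.
case: eqVneq => [->|ne]; first by rewrite ltnn leqnn.
by rewrite addn0 (leq_eqVlt x) (negbTE ne).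
Qed.

Lemma tele (A : nat -> nat) k : (forall i, (i < k)%N -> (A i <= A i.+1)%N) ->
  (\sum_(0 <= i < k) (A i.+1 - A i) = A k - A 0)%N.
Proof.
elim: k => [|k IH] h; first by rewrite big_nil subnn.
rewrite big_nat_recr //= IH; last by move=> i hi; apply: h; apply: ltnW.
have h1 : (A 0 <= A k)%N.
  elim: k {IH} h => [|k' IHk] h'; first by [].
  apply: leq_trans (IHk _) (h' k' _) => //.
  by move=> i hi; apply: h'; apply: ltnW.
have := h k (ltnSn k); lia.
Qed.

Lemma prod_pick (R : comPzRingType) (f : nat -> R) x K : (x < K)%N ->
  \prod_(0 <= i < K) f i ^+ (x == i) = f x.
Proof.
elim: K => [|K IH] //; rewrite ltnS leq_eqVlt => /orP[/eqP ->|h].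
  rewrite big_nat_recr //= eqxx expr1 big_nat big1 ?mul1r // => i /andP[_ hi].
  by rewrite (gtn_eqF hi) expr0.
by rewrite big_nat_recr //= IH // (ltn_eqF h) expr0 mulr1.
Qed.

Section Tail.
Variables (C : numClosedFieldType) (n m : nat) (P : 'I_m -> 'rV[C]_n.+1).

Lemma delta_props : 0 < delta P /\ delta P <= 1.
Proof.
have Dc1 : 1 <= Dc P.
  rewrite /Dc; apply: mulr_ege1; first apply: mulr_ege1.
  - by apply: exprn_ege1; rewrite ler1n.
  - exact: Kbig_ge1.
  - by apply: exprn_ege1; rewrite ler1n.
have D2 : 1 <= 2%:R * Dc P.
  apply: mulr_ege1 => //; by rewrite ler1n.
have D0 : 0 < 2%:R * Dc P by apply: lt_le_trans D2; exact: ltr01.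
split; first by rewrite /delta invr_gt0.
by rewrite /delta invr_le1 // unitfE gt_eqF.
Qed.

Lemma tail_ge0 N j k : 0 <= tail P N j k.
Proof. by apply: sumr_ge0 => i _; case: ifP => // _; apply: exprn_ge0. Qed.

Lemma tail_mono N j k1 k2 : (k1 <= k2)%N -> tail P N j k2 <= tail P N j k1.
Proof.
move=> h; apply: ler_sum => i _; case: ifP => h2.
  by rewrite (leq_trans h h2).
by case: ifP => // _; apply: exprn_ge0.
Qed.

Lemma tail0 N j : tail P N j 0 = nrm2 (P j *m N^T).
Proof. by apply: eq_bigr. Qed.

Lemma tail_top N j : tail P N j n.+1 = 0.
Proof. by apply: big1 => i _; rewrite leqNgt ltn_ord. Qed.
End Tail.

Local Close Scope sesquilinear_scope.
Unset Implicit Arguments.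
Theorem mainTheorem1 (R : realType) (n m : nat)
    (P : 'I_m -> 'rV[R[i]]_n.+1)
    (hnorm : forall j, (map_mx Num.conj (P j) *m (P j)^T) 0 0 = 1) :
  exists c : R, 0 < c /\
    forall (Q : 'M[R[i]]_n.+1) (lam : 'I_n.+1 -> R),
      map_mx Num.conj Q^T = Q ->
      (forall v : 'rV[R[i]]_n.+1, v != 0 -> 0 < herm_form Q v) ->
      char_poly Q = \prod_(k < n.+1) ('X - ((lam k)%:C)%C%:P) ->
      0 < lam ord0 ->
      (forall k l : 'I_n.+1, (k <= l)%N -> lam k <= lam l) ->
      ((c * \prod_(k < n.+1) lam k ^+ (phiv P k.+1 - phiv P k)%N)%:C)%C
        <= \prod_(j < m) herm_form Q (P j).
Proof.
have [d0 d1] := delta_props P.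
set d := delta P in d0 d1 *.
have dE : d = ((complex.Re d)%:C)%C.
  by rewrite [LHS]complexE (ger0_Im (ltW d0)) mulr0 addr0.
have dr0 : 0 < complex.Re d by move: d0; rewrite ltcE => /andP[_].
exists (complex.Re d ^+ m); split; first exact: exprn_gt0.
move=> Q lam hQ _ hchar hl0 hmono.
have [N [hN hform]] := spectral_sorted hQ hchar.
have nP : forall j, nrm2 (P j) = 1 by move=> j; rewrite nrm2E.
pose lamN (i : nat) := lam (inord i).
have lamNE : forall i : 'I_n.+1, lamN i = lam i by move=> i; rewrite /lamN inord_val.
have lpos : forall i : 'I_n.+1, 0 < lam i.
  by move=> i; apply: lt_le_trans hl0 _; apply: hmono.
have ex : forall j, exists k, (tail P N j k.+1 < d) && (k <= n)%N.
  by move=> j; exists n; rewrite tail_top d0 leqnn.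
pose t j := ex_minn (ex j).
have tP : forall j, (tail P N j (t j).+1 < d) && (t j <= n)%N.
  by move=> j; rewrite /t; case: ex_minnP.
have tmin : forall j k, (tail P N j k.+1 < d) -> (k <= n)%N -> (t j <= k)%N.
  by move=> j k h1 h2; rewrite /t; case: ex_minnP => x _; apply; rewrite h1 h2.
have tn : forall j, (t j <= n)%N by move=> j; case/andP: (tP j).
have Pnz : forall j, P j != 0.
  move=> j; apply/eqP => e; have := nP j; rewrite e /nrm2 big1 => [/eqP|i _].
    by rewrite eq_sym oner_eq0.
  by rewrite mxE normr0 expr0n.
have hherm : forall j, d * ((lamN (t j))%:C)%C <= herm_form Q (P j).
  move=> j; rewrite /herm_form hform.
  pose tt : 'I_n.+1 := inord (t j).
  have ttE : (tt : nat) = t j by rewrite /tt inordK // ltnS.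
  have -> : lamN (t j) = lam tt by [].
  have s1 : ((lam tt)%:C)%C * tail P N j (t j) <= \sum_k ((lam k)%:C)%C * `|(P j *m N^T) 0 k| ^+ 2.
    rewrite /tail mulr_sumr; apply: ler_sum => i _; case: ifP => hi.
      apply: ler_wpM2r; first exact: exprn_ge0.
      by rewrite lecR; apply: hmono; rewrite ttE.
    by rewrite mulr0; apply: mulr_ge0; [rewrite ler0c ltW | apply: exprn_ge0].
  apply: le_trans s1; rewrite mulrC; apply: ler_wpM2l; first by rewrite ler0c ltW.
  case htj: (t j) => [|k].
    by rewrite tail0 hN nP.
  have nlt : ~~ (tail P N j k.+1 < d).
    apply/negP => h; have := tmin j k h; rewrite htj ltnn.
    move=> H; have hk : (k <= n)%N by have := tn j; rewrite htj; apply: ltnW.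
    by have := H hk.
  by rewrite real_leNgt // ?ger0_real ?(ltW d0) ?tail_ge0.
have p0 : phiv P 0 = 0%N by apply: phiv_bot.
have ptop : phiv P n.+1 = m by apply: phiv_top.
pose b i := (\sum_(j < m) (t j == i))%N.
pose a i := (phiv P i.+1 - phiv P i)%N.
have sb : forall k, (\sum_(0 <= i < k) b i = \sum_(j < m) (t j < k))%N.
  by move=> k; rewrite /b exchange_big /=; apply: eq_bigr => j _; rewrite cnt.
have sa : forall k, (k <= n.+1)%N -> (\sum_(0 <= i < k) a i = phiv P k)%N.
  move=> k hk; rewrite /a tele ?p0 ?subn0 // => i hi; apply: phiv_mono.
  exact: leq_trans hi hk.
have hmaj := @maj R n lamN a b.
have F3 : \prod_(0 <= i < n.+1) lamN i ^+ a i <= \prod_(0 <= i < n.+1) lamN i ^+ b i.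
  apply: hmaj.
  - by move=> i hi; apply: lpos.
  - move=> i hi; apply: hmono; rewrite !inordK //; apply: ltnW; by rewrite ltnS.
  - move=> k hk; rewrite sb sa //.
    apply: leq_trans (lemA P hN hk).
    rewrite -sum1_card [X in (_ <= X)%N]big_mkcond /=; apply: leq_sum => j _.
    case: ltnP => // hjk; rewrite inE.
    have := tP j => /andP[h1 _]; rewrite (le_lt_trans _ h1) //.
    by apply: tail_mono; rewrite ltnS -ltnS.
  - rewrite sb sa // ptop -[RHS]card_ord -sum1_card; apply: eq_bigr => j _.
    by rewrite ltnS tn.
have e1 : \prod_(0 <= i < n.+1) lamN i ^+ b i = \prod_(j < m) lamN (t j).
  rewrite /b; under eq_bigr do rewrite -prodrXr.
  rewrite exchange_big /=; apply: eq_bigr => j _.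
  by rewrite prod_pick // ltnS.
have e2 : \prod_(0 <= i < n.+1) lamN i ^+ a i = \prod_(k < n.+1) lam k ^+ (phiv P k.+1 - phiv P k).
  by rewrite big_mkord; apply: eq_bigr => k _; rewrite lamNE.
rewrite e2 e1 in F3.
rewrite rmorphM /= rmorphXn /= -dE.
apply: le_trans (_ : d ^+ m * ((\prod_(j < m) lamN (t j))%:C)%C <= _).
  apply: ler_wpM2l; first by rewrite exprn_ge0 // ltW.
  by rewrite lecR.
have -> : d ^+ m * ((\prod_(j < m) lamN (t j))%:C)%C = \prod_(j < m) (d * ((lamN (t j))%:C)%C).
  by rewrite big_split /= prodr_const card_ord rmorph_prod.
apply: ler_prod => j _; rewrite hherm andbT; apply: mulr_ge0; first exact: ltW.
by rewrite ler0c ltW // lpos.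
Qed.
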